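(* Assume the setting below and define $$\alpha_{GB+ST}(t)=\max_{0\le j\le N-1}\ \sum_{k=j}^{j+N-1}(L_k+L^G_k)\,C\left\lceil\frac{t-o_{k,j}+L^G_k-L^G_j}{p}\right\rceil,\qquad t\ge0.$$ Then for all $s\in\mathbb R$ and $t\ge0$, $C$ times the Lebesgue measure of $(G\cup S)\cap[s,s+t]$ is at most $\alpha_{GB+ST}(t)$; i.e. $\alpha_{GB+ST}$ is an arrival curve of the credit-frozen part due to ST windows and guard bands.
   Context: Fix an output port with physical link rate $C>0$. Its gate control list (GCL) is periodic with period $p>0$ and contains $N\ge 1$ scheduled-traffic (ST) windows per period. Window $k\in\{0,\dots,N-1\}$ is the interval $[o_k,o_k+L_k)$, where $0\le o_0<o_1<\dots<o_{N-1}<p$, $L_k\ge 0$, $o_k+L_k\le o_{k+1}$ for $k<N-1$ and $o_{N-1}+L_{N-1}\le o_0+p$. Indices are extended to all integers periodically: $o_{k+N}=o_k+p$, $L_{k+N}=L_k$. Relative offsets are $o_{j,i}=o_j-o_i$. Let $S=\bigcup_{k\in\mathbb Z}[o_k,o_k+L_k)$. Guard bands: for each $k$, $L^G_k=\min\{\ell/C,\ o_k-(o_{k-1}+L_{k-1})\}$, where $\ell>0$ is the maximal frame size of the AVB flows of classes $M_1,\dots,M_i$ competing at the port; thus $L^G_{k+N}=L^G_k$ and the guard band of window $k$ is $[o_k-L^G_k,o_k)$. Let $G=\bigcup_{k\in\mathbb Z}[o_k-L^G_k,o_k)$. *)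

(* Defs.v *)
From HB Require Import structures.
From mathcomp Require Import all_boot all_order all_algebra.
From mathcomp Require Import all_classical all_reals all_analysis.
Set Implicit Arguments. Unset Strict Implicit. Unset Printing Implicit Defensive.
Import Order.TTheory GRing.Theory Num.Theory.
Local Open Scope ring_scope.
Local Open Scope classical_set_scope.

Section GCL.
Variables (R : realType) (N : nat) (p : R) (o L : nat -> R).

(* periodic extension to all integer indices: o_{k+N} = o_k + p, L_{k+N} = L_k *)
Definition oZ (k : int) : R :=
  o `|(k %% (N:int))%Z|%N + ((k %/ (N:int))%Z)%:~R * p.
Definition LZ (k : int) : R := L `|(k %% (N:int))%Z|%N.

Definition orel (k j : int) : R := oZ k - oZ j.

Definition LG (ell C : R) (k : int) : R :=
  Num.min (ell / C) (oZ k - (oZ (k - 1) + LZ (k - 1))).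

Definition STset : set R := [set x | exists k : int, oZ k <= x < oZ k + LZ k].
Definition GBset (ell C : R) : set R :=
  [set x | exists k : int, oZ k - LG ell C k <= x < oZ k].

Definition alpha_term (ell C t : R) (j : nat) : R :=
  \sum_(k <- iota j N)
    (LZ k + LG ell C k) * C *
      (Num.ceil ((t - orel k j + LG ell C k - LG ell C j) / p))%:~R.

(* alpha_{GB+ST}(t) = max over 0 <= j <= N-1 (N >= 1, seed with j = 0) *)
Definition alpha_GBST (ell C t : R) : R :=
  \big[Num.max/alpha_term ell C t 0]_(j < N) alpha_term ell C t j.

End GCL.

(* Main.v *)
Require Import Defs.
From HB Require Import structures.
From mathcomp Require Import all_boot all_order all_algebra.
From mathcomp Require Import all_classical all_reals all_analysis.
From mathcomp Require Import lra ring zify.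
Import Order.TTheory GRing.Theory Num.Theory.
Local Open Scope ring_scope.
Local Open Scope classical_set_scope.

Lemma decompZ (N : nat) (k : int) : (0 < N)%N ->
  exists q : int, exists r : nat, (r < N)%N /\ k = q * N%:Z + r%:Z.
Proof.
move=> HN; exists (k %/ N)%Z, `|(k %% N)%Z|%N; split.
  have h1 : (0 <= (k %% N)%Z) by apply: modz_ge0; rewrite eqz_nat -lt0n.
  have h2 : ((k %% N)%Z < N%:Z) by apply: ltz_pmod; rewrite ltz_nat.
  by rewrite -ltz_nat gez0_abs.
have h1 : (0 <= (k %% N)%Z) by apply: modz_ge0; rewrite eqz_nat -lt0n.
by rewrite gez0_abs // -divz_eq.
Qed.

Lemma oZ_dec (R : realType) (N : nat) (p : R) (o : nat -> R) (q : int) (r : nat) :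
  (r < N)%N -> oZ N p o (q * N%:Z + r%:Z) = o r + q%:~R * p.
Proof.
move=> Hr; rewrite /oZ.
have HN0 : (N%:Z != 0) by rewrite eqz_nat; apply/eqP=> E; rewrite E in Hr.
have hm : ((q * N%:Z + r%:Z) %% N%:Z)%Z = r%:Z.
  by rewrite modzMDl modz_small // ltz_nat Hr andbT.
have hd : ((q * N%:Z + r%:Z) %/ N%:Z)%Z = q.
  by rewrite divzMDl // divz_small ?addr0 // Hr.
by rewrite hm hd.
Qed.

Lemma LZ_dec (R : realType) (N : nat) (L : nat -> R) (q : int) (r : nat) :
  (r < N)%N -> LZ N L (q * N%:Z + r%:Z) = L r.
Proof.
move=> Hr; rewrite /LZ.
have hm : ((q * N%:Z + r%:Z) %% N%:Z)%Z = r%:Z.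
  by rewrite modzMDl modz_small // ltz_nat Hr andbT.
by rewrite hm.
Qed.
Lemma oZ_per (R : realType) (N : nat) (p : R) (o : nat -> R) (k m : int) :
  (0 < N)%N -> oZ N p o (k + m * N%:Z) = oZ N p o k + m%:~R * p.
Proof.
move=> HN; have [q [r [Hr ->]]] := decompZ N k HN.
have -> : q * N%:Z + r%:Z + m * N%:Z = (q + m) * N%:Z + r%:Z by rewrite mulrDl addrAC.
rewrite !oZ_dec // intrD mulrDl; lra.
Qed.

Lemma LZ_per (R : realType) (N : nat) (L : nat -> R) (k m : int) :
  (0 < N)%N -> LZ N L (k + m * N%:Z) = LZ N L k.
Proof.
move=> HN; have [q [r [Hr ->]]] := decompZ N k HN.
have -> : q * N%:Z + r%:Z + m * N%:Z = (q + m) * N%:Z + r%:Z by rewrite mulrDl addrAC.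
by rewrite !LZ_dec.
Qed.

Lemma LG_per (R : realType) (N : nat) (p : R) (o L : nat -> R) ell C (k m : int) :
  (0 < N)%N -> LG N p o L ell C (k + m * N%:Z) = LG N p o L ell C k.
Proof.
move=> HN; rewrite /LG.
have -> : k + m * N%:Z - 1 = (k - 1) + m * N%:Z by rewrite addrAC.
rewrite !oZ_per // LZ_per //.
congr (Num.min _ _); lra.
Qed.

Lemma gapZ (R : realType) (N : nat) (p : R) (o L : nat -> R) (k : int) :
  (0 < N)%N ->
  (forall k : nat, (k.+1 < N)%N -> o k + L k <= o k.+1) ->
  o N.-1 + L N.-1 <= o 0%N + p ->
  oZ N p o k + LZ N L k <= oZ N p o (k + 1).
Proof.
move=> HN Hgap Hlast; have [q [r [Hr ->]]] := decompZ N k HN.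
rewrite oZ_dec // LZ_dec //.
have [Hr1|Hr1] := ltnP r.+1 N.
  have -> : q * N%:Z + r%:Z + 1 = q * N%:Z + r.+1%:Z by lia.
  rewrite oZ_dec //; have := Hgap r Hr1; lra.
have Er : r = N.-1 by apply/eqP; rewrite eqn_leq -ltnS prednK // Hr /= -ltnS prednK.
have -> : q * N%:Z + r%:Z + 1 = (q + 1) * N%:Z + 0%N%:Z.
  rewrite Er; move: HN; case: (N) => // n _ /=; lia.
rewrite oZ_dec // intrD mulrDl mul1r Er; lra.
Qed.
Lemma ceil_sub1 (R : realType) (y : R) : Num.ceil (y - 1) = Num.ceil y - 1.
Proof.
apply: ceil_def; have := ceil_itv y; rewrite !intrD !intrN => /andP[h1 h2].
apply/andP; split; lra.
Qed.

Lemma comb (R : realType) (p : R) (N : nat) (x l : nat -> R) :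
  0 < p -> (forall n, 0 <= x n) -> (forall n, x (N + n)%N = x n + p) ->
  (forall n, l (N + n)%N = l n) -> (forall n, 0 <= l n) ->
  (forall n, (n < N)%N -> 0 < l n -> x n < p) ->
  forall Q t, 0 <= t ->
  \sum_(n <- iota 0 (Q * N)) (if x n < t then l n else 0)
  <= \sum_(r <- iota 0 N) l r * (Num.ceil ((t - x r) / p))%:~R.
Proof.
move=> Hp Hx0 Hx Hl Hl0 HxN.
have base : forall r t, (r < N)%N -> 0 <= t ->
   0 <= l r * (Num.ceil ((t - x r) / p))%:~R /\
   (x r < t -> l r <= l r * (Num.ceil ((t - x r) / p))%:~R).
  move=> r t Hr Ht.
  have [l0|lpos] := eqVneq (l r) 0.
    by rewrite l0 mul0r; split => //.
  have lp : 0 < l r by rewrite lt_neqAle eq_sym lpos Hl0.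
  have xr := HxN r Hr lp.
  have c0 : 0 <= Num.ceil ((t - x r) / p).
    rewrite ceil_ge0 ltr_pdivlMr //; lra.
  split; first by apply: mulr_ge0 => //; rewrite ler0z.
  move=> xt; apply: ler_peMr; first exact: ltW.
  rewrite ler1z; have : 0 < Num.ceil ((t - x r) / p).
    by rewrite ceil_gt_int /= divr_gt0 // subr_gt0.
  by [].
elim=> [|Q IH] t Ht.
  rewrite mul0n big_nil; rewrite big_seq; apply: sumr_ge0 => r.
  by rewrite mem_iota add0n => /andP[_ Hr]; case: (base r t Hr Ht).
rewrite mulSn iotaD big_cat add0n -[in iota N _](addn0 N) iotaDl big_map /= ?addn0.
rewrite [X in _ + X <= _](eq_bigr (fun j => if x j < t - p then l j else 0)); last first.
  move=> n _; rewrite Hx Hl.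
  have -> : (x n + p < t) = (x n < t - p) by apply/idP/idP => h; lra.
  by [].

have [tp|tp] := leP p t.
  have IH' := IH (t - p) ltac:(lra).
  apply: (le_trans (lerD (lexx _) IH')).
  rewrite -big_split /= big_seq [X in _ <= X]big_seq; apply: ler_sum => r.
  rewrite mem_iota add0n => /andP[_ Hr].
  have -> : (t - p - x r) / p = (t - x r) / p - 1.
    by rewrite [t - p - x r]addrAC mulrBl divff // gt_eqF.
  rewrite ceil_sub1 intrD intrN mulrDr mulrN1.
  have := Hl0 r; case: ifP => _ h; lra.
have -> : \sum_(j <- iota 0 (Q * N)) (if x j < t - p then l j else 0) = 0.
  rewrite big1 // => n _; case: ifP => // h; have := Hx0 n; lra.
rewrite addr0 big_seq [X in _ <= X]big_seq; apply: ler_sum => r.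
rewrite mem_iota add0n => /andP[_ Hr]; case: (base r t Hr Ht) => h1 h2.
by case: ifP => // h; apply: h2.
Qed.
Lemma mu_co (R : realType) (a b : R) : a <= b ->
  lebesgue_measure [set x : R | a <= x < b] = (b - a)%:E.
Proof.
move=> ab; rewrite -set_itvco lebesgue_measure_itv /= lte_fin.
case: ltP => h; first by rewrite EFinB.
have -> : b = a by apply/eqP; rewrite eq_le ab h.
by rewrite subrr.
Qed.
Lemma mu_cc0 (R : realType) (a b : R) : b <= a ->
  lebesgue_measure [set x : R | a <= x <= b] = 0%E.
Proof.
move=> ab; rewrite -set_itvcc lebesgue_measure_itv /= lte_fin.
by case: ltP => h //; move: h; rewrite ltNge ab.
Qed.
Lemma meas_co (R : realType) (a b : R) : measurable [set x : R | a <= x < b].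
Proof. by rewrite -set_itvco; apply: measurable_itv. Qed.
Lemma meas_cc (R : realType) (a b : R) : measurable [set x : R | a <= x <= b].
Proof. by rewrite -set_itvcc; apply: measurable_itv. Qed.
Lemma meas_oc (R : realType) (a b : R) : measurable [set x : R | a < x <= b].
Proof. by rewrite -set_itvoc; apply: measurable_itv. Qed.
Lemma mu_oc (R : realType) (a b : R) : a <= b ->
  lebesgue_measure [set x : R | a < x <= b] = (b - a)%:E.
Proof.
move=> ab; rewrite -set_itvoc lebesgue_measure_itv /= lte_fin.
case: ltP => h; first by rewrite EFinB.
have -> : b = a by apply/eqP; rewrite eq_le ab h.
by rewrite subrr.
Qed.
Lemma bigmax_ge (R : realType) (x0 : R) (F : nat -> R) n j : (j < n)%N ->
  F j <= \big[Num.max/x0]_(k < n) F k.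
Proof.
move=> hj; exact: (le_bigmax x0 (fun k : 'I_n => F k) (Ordinal hj)).
Qed.

Lemma alg1 (R : realType) (t a b c d e : R) :
  t - (a - b + c - (d - e + c)) = t - (a - d) + b - e.
Proof. lra. Qed.

Section Main.
Variables (R : realType) (C p ell : R) (N : nat) (o L : nat -> R).
Hypotheses (HC : 0 < C) (Hp : 0 < p) (Hell : 0 < ell) (HN : (1 <= N)%N)
  (Ho0 : 0 <= o 0%N) (HoN : o N.-1 < p)
  (Hinc : forall k : nat, (k.+1 < N)%N -> o k < o k.+1)
  (HL0 : forall k : nat, (k < N)%N -> 0 <= L k)
  (Hgap : forall k : nat, (k.+1 < N)%N -> o k + L k <= o k.+1)
  (Hlast : o N.-1 + L N.-1 <= o 0%N + p).

Definition oo k := oZ N p o k.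
Definition ll k := LZ N L k.
Definition gg k := LG N p o L ell C k.
Definition aZ k := oo k - gg k.
Definition eZ k := oo k + ll k.

Lemma ll_ge0 k : 0 <= ll k.
Proof. have [q [r [Hr ->]]] := decompZ N k HN. by rewrite /ll LZ_dec // HL0. Qed.

Lemma gap k : oo k + ll k <= oo (k + 1).
Proof. exact: gapZ. Qed.

Lemma gg_le k : gg k <= oo k - (oo (k - 1) + ll (k - 1)).
Proof. by rewrite /gg /LG ge_min lexx orbT. Qed.

Lemma gg_ge0 k : 0 <= gg k.
Proof.
rewrite /gg /LG le_min; apply/andP; split.
  by apply: divr_ge0; apply: ltW.
have := gap (k - 1); rewrite subrK /oo /ll => h; lra.
Qed.

Lemma a_le_e k : aZ k <= eZ k.
Proof. rewrite /aZ /eZ; have := gg_ge0 k; have := ll_ge0 k; lra. Qed.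

Lemma a_le_o k : aZ k <= oo k.
Proof. rewrite /aZ; have := gg_ge0 k; lra. Qed.

Lemma e_le_a k : eZ k <= aZ (k + 1).
Proof. rewrite /aZ /eZ; have := gg_le (k + 1); rewrite addrK; lra. Qed.

Lemma a_per k m : aZ (k + m * N%:Z) = aZ k + m%:~R * p.
Proof. rewrite /aZ /oo /gg oZ_per // LG_per //; lra. Qed.

Lemma e_per k m : eZ (k + m * N%:Z) = eZ k + m%:~R * p.
Proof. rewrite /eZ /oo /ll oZ_per // LZ_per //; lra. Qed.

Lemma ll_per k m : ll (k + m * N%:Z) = ll k.
Proof. by rewrite /ll LZ_per. Qed.

Lemma gg_per k m : gg (k + m * N%:Z) = gg k.
Proof. by rewrite /gg LG_per. Qed.

Lemma mono_nat k (n : nat) :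
  [/\ aZ k <= aZ (k + n%:Z), eZ k <= eZ (k + n%:Z) &
      ((0 < n)%N -> eZ k <= aZ (k + n%:Z))].
Proof.
elim: n => [|n [IH1 IH2 IH3]]; first by rewrite addr0 !lexx.
have E : k + n.+1%:Z = (k + n%:Z) + 1 by lia.
rewrite E; have h1 := e_le_a (k + n%:Z); have h2 := a_le_e (k + n%:Z).
have h3 := a_le_e (k + n%:Z + 1).
split.
- exact: le_trans IH1 (le_trans h2 h1).
- exact: le_trans IH2 (le_trans h1 h3).
- move=> _; case: n IH1 IH2 IH3 E h1 h2 h3 => [|n] IH1 IH2 IH3 E h1 h2 h3.
    by rewrite addr0 in h1 *.
  exact: le_trans (IH3 erefl) (le_trans h2 h1).
Qed.

Lemma a_mono k l : k <= l -> aZ k <= aZ l.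
Proof.
move=> kl; have -> : l = k + `|l - k|%N%:Z by rewrite gez0_abs ?subr_ge0 //; lia.
by case: (mono_nat k `|l - k|%N).
Qed.

Lemma e_mono k l : k <= l -> eZ k <= eZ l.
Proof.
move=> kl; have -> : l = k + `|l - k|%N%:Z by rewrite gez0_abs ?subr_ge0 //; lia.
by case: (mono_nat k `|l - k|%N).
Qed.

Lemma ea_mono k l : k < l -> eZ k <= aZ l.
Proof.
move=> kl; have -> : l = k + `|l - k|%N%:Z by rewrite gez0_abs ?subr_ge0 ?ltW //; lia.
case: (mono_nat k `|l - k|%N) => _ _; apply; rewrite absz_gt0 subr_eq0.
by apply/eqP => E; rewrite E ltxx in kl.
Qed.


Definition Ik k : set R := [set x | aZ k <= x < eZ k].
Definition Jc (c t : R) : set R := [set x | c <= x <= c + t].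

Lemma Ik_meas k : measurable (Ik k).
Proof. exact: meas_co. Qed.

Lemma Jc_meas c t : measurable (Jc c t).
Proof. exact: meas_cc. Qed.

Lemma len_eq k : eZ k - aZ k = ll k + gg k.
Proof. rewrite /eZ /aZ; lra. Qed.

Lemma term_bound k b t :
  (lebesgue_measure (Ik k `&` Jc b t) <=
   (if aZ k - b < t then ll k + gg k else 0)%:E)%E.
Proof.
case: ifP => h.
  have hh : (lebesgue_measure (Ik k `&` Jc b t) <= lebesgue_measure (Ik k))%E.
    exact: (measureIl (@lebesgue_measure R) (Ik_meas k) (Jc_meas b t)).
  apply: (le_trans hh).
  by rewrite /Ik mu_co ?a_le_e // len_eq.
have sub : Ik k `&` Jc b t `<=` [set x | aZ k <= x <= b + t].
  move=> x [/andP[h1 h2] /andP[h3 h4]]; apply/andP; split => //.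
have hh : (lebesgue_measure (Ik k `&` Jc b t) <= lebesgue_measure [set x : R | (aZ k <= x <= b + t)%R])%E.
  apply: le_measure => //; rewrite inE.
  - by apply: measurableI; [exact: Ik_meas | exact: Jc_meas].
  - exact: meas_cc.
apply: (le_trans hh).
- rewrite mu_cc0 //; move/negbT: h; rewrite -leNgt => h; lra.
Qed.

Lemma main_bound s t i M :
  0 <= t -> eZ (i - 1) <= s -> s < eZ i -> s + t < aZ (i + M%:Z) -> (0 < M)%N ->
  (lebesgue_measure ((GBset N p o L ell C `|` STset N p o L) `&`
                     [set x : R | (s <= x <= s + t)%R])
   <= (\sum_(n < M) (if aZ (i + n%:Z) - aZ i < t
                     then ll (i + n%:Z) + gg (i + n%:Z) else 0))%:E)%E.
Proof.
move=> Ht Hs1 Hs2 HM M0.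
set F := fun n : nat => Ik (i + n%:Z) `&` Jc (aZ i) t.
set X := \big[setU/set0]_(n < M) (Ik (i + n%:Z) `&` Jc s t).
have eqX : (GBset N p o L ell C `|` STset N p o L) `&` [set x : R | (s <= x <= s + t)%R] = X.
  rewrite /X -(bigcup_mkord M (fun n => Ik (i + n%:Z) `&` Jc s t)); apply/seteqP; split => x.
  - move=> [hF /andP[hs ht]].
    have [k [hk1 hk2]] : exists k, aZ k <= x /\ x < eZ k.
      case: hF => -[k /andP[h1 h2]]; exists k.
        split; first by rewrite /aZ /oo /gg.
        by have := ll_ge0 k; rewrite /eZ /oo; lra.
      split; last by rewrite /eZ /oo /ll.
      by have := a_le_o k; rewrite /oo; lra.
    have ik : i <= k.
      rewrite leNgt; apply/negP => ki.
      have ki' : k <= i - 1 by rewrite -ltzD1 subrK.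
      have h := e_mono k (i - 1) ki'.
      have := le_lt_trans (le_trans (le_trans h Hs1) hs) hk2.
      by rewrite ltxx.
    have kM : k < i + M%:Z.
      rewrite ltNge; apply/negP => h.
      have h' := a_mono _ _ h.
      have := lt_le_trans (le_lt_trans (le_trans h' hk1) (le_lt_trans ht HM)) (lexx _).
      by rewrite ltxx.
    exists `|k - i|%N.
      by rewrite /= -ltz_nat gez0_abs ?subr_ge0 // ltrBlDl.
    rewrite gez0_abs ?subr_ge0 //.
    rewrite addrCA subrr addr0.
    by split => //; apply/andP.
  - move=> [n hn [hI hJ]]; split => //.
    move: hI => /andP[h1 h2].
    case: (ltP x (oo (i + n%:Z))) => h.
      left; exists (i + n%:Z); apply/andP; split => //.
    right; exists (i + n%:Z); apply/andP; split => //.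
have mX : measurable X.
  apply: bigsetU_measurable => n _; apply: measurableI; [exact: Ik_meas | exact: Jc_meas].
have HF : forall k, `I_M k -> measurable (F k).
  by move=> k _; apply: measurableI; [exact: Ik_meas | exact: Jc_meas].
rewrite eqX.
have fin : forall n : 'I_M, (lebesgue_measure (F n) <=
   (if aZ (i + n%:Z) - aZ i < t then ll (i + n%:Z) + gg (i + n%:Z) else 0)%:E)%E.
  by move=> n; exact: term_bound.
rewrite -sumEFin.
have [sa|sa] := leP s (aZ i).
  apply: (le_trans (content_subadditive (@lebesgue_measure R) (F:=F) (n:=M) HF mX _)).
    move=> x; rewrite /X -(bigcup_mkord M (fun n => Ik (i + n%:Z) `&` Jc s t)) -(bigcup_mkord M F) => -[n hn [hI /andP[h1 h2]]]; exists n => //.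
    split => //; move: hI => /andP[h3 h4].
    have h5 : aZ i <= aZ (i + n%:Z) by apply: a_mono; rewrite lerDl.
    apply/andP; split; lra.
  by apply: lee_sum => n _; exact: fin.
set D := [set x : R | aZ i <= x < s].
set E := [set x : R | aZ i + t < x <= s + t].
have dis : X `&` D = set0.
  apply/seteqP; split => x // -[Xx /andP[_ Dx]].
  move: Xx; rewrite /X -(bigcup_mkord M (fun n => Ik (i + n%:Z) `&` Jc s t)) => -[n _ [_ /andP[h1 _]]]; lra.
have U := measureU (@lebesgue_measure R) mX (meas_co _ (aZ i) s) dis.
set F' := fun k : nat => if (k < M)%N then F k else E.
have HF' : forall k, `I_M.+1 k -> measurable (F' k).
  move=> k _; rewrite /F'; case: ifP => kM; first exact: HF kM.
  exact: meas_oc.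
have sub : X `|` D `<=` \big[setU/set0]_(k < M.+1) F' k.
  move=> x; rewrite -(bigcup_mkord M.+1 F') => -[Xx|/andP[h1 h2]].
    move: Xx; rewrite /X -(bigcup_mkord M (fun n => Ik (i + n%:Z) `&` Jc s t)) => -[n hn [hI /andP[h1 h2]]].
    have [xle|xgt] := leP x (aZ i + t).
      exists n; first by move: hn => /= /ltnW.
      rewrite /F' ifT; last by exact: hn.
      split => //; move: hI => /andP[h3 h4].
      have h5 : aZ i <= aZ (i + n%:Z) by apply: a_mono; rewrite lerDl.
      apply/andP; split; lra.
    exists M; first exact: ltnSn.
    rewrite /F' ltnn; apply/andP; split => //.
  have [xle|xgt] := leP x (aZ i + t).
    exists 0%N => //; rewrite /F' M0; split; last by apply/andP; split.
    by rewrite addr0; apply/andP; split => //; lra.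
  exists M; first exact: ltnSn.
    rewrite /F' ltnn; apply/andP; split => //; lra.
have le1 := content_subadditive (@lebesgue_measure R) (F:=F') (n:=M.+1) HF'
   (measurableU _ _ mX (meas_co _ (aZ i) s)) sub.
rewrite U big_ord_recr /= /F' ltnn in le1.
have muD : lebesgue_measure D = (s - aZ i)%:E by rewrite mu_co //; exact: ltW.
have muE : lebesgue_measure E = (s - aZ i)%:E.
  by rewrite mu_oc; [congr (_%:E); lra | lra].
rewrite muD muE in le1.
have le2 : (lebesgue_measure X <= \sum_(k < M) lebesgue_measure (F k))%E.
  rewrite -(leeD2rE _ _ (x := (s - aZ i)%:E)) //.
  apply: (le_trans le1); rewrite leeD2rE //.
  by apply: lee_sum => k _; rewrite ltn_ord.
apply: (le_trans le2).
by apply: lee_sum => n _; exact: fin.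
Qed.

Lemma find_i s : exists i, eZ (i - 1) <= s /\ s < eZ i.
Proof.
set m := Num.floor ((s - eZ 0) / p).
set k0 := m * N%:Z.
have hk0 : eZ k0 <= s.
  have := e_per 0 m; rewrite add0r => ->.
  have h1 : m%:~R <= (s - eZ 0) / p := floor_le _.
  have h2 : m%:~R * p <= s - eZ 0.
    by rewrite -(ler_pdivlMr _ _ Hp).
  by rewrite -lerBrDl.
set Q := (Num.trunc ((s - eZ k0) / p)).+1.
have exP : exists n : nat, s < eZ (k0 + n%:Z).
  exists (Q * N)%N; rewrite PoszM e_per.
  have h1 : (s - eZ k0) / p < Q%:R := truncnS_gt _.
  have h2 : s - eZ k0 < Q%:R * p by rewrite -ltr_pdivrMr.
  have -> : (Q%:Z)%:~R = Q%:R :> R by [].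
  by rewrite -ltrBlDl.
case: (ex_minnP exP) => n Pn Hmin.
have n0 : (0 < n)%N.
  rewrite lt0n; apply/negP => /eqP E; move: Pn; rewrite E addr0 => h.
  by move: (le_lt_trans hk0 h); rewrite ltxx.
exists (k0 + n%:Z); split => //.
have E : k0 + n%:Z - 1 = k0 + (n.-1)%:Z.
  by rewrite -{1}(prednK n0) intS addrA addrAC addrK.
rewrite E; rewrite leNgt; apply/negP => h.
have := Hmin _ h; rewrite -ltnS prednK // ltnn.
by [].
Qed.

Lemma final s t : 0 <= t ->
  (C%:E * lebesgue_measure ((GBset N p o L ell C `|` STset N p o L) `&`
                     [set x : R | (s <= x <= s + t)%R])
   <= (alpha_GBST N p o L ell C t)%:E)%E.
Proof.
move=> Ht.
have [i [Hi1 Hi2]] := find_i s.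
set Q := (Num.trunc ((s + t - aZ i) / p)).+1.
set M := (Q * N)%N.
have HM : s + t < aZ (i + M%:Z).
  rewrite /M PoszM a_per.
  have h1 : (s + t - aZ i) / p < Q%:R := truncnS_gt _.
  have h2 : s + t - aZ i < Q%:R * p by rewrite -ltr_pdivrMr.
  have -> : (Q%:Z)%:~R = Q%:R :> R by [].
  by rewrite -ltrBlDl.
have M0 : (0 < M)%N by rewrite /M muln_gt0 HN.
have B1 := main_bound s t i M Ht Hi1 Hi2 HM M0.
set x := fun n : nat => aZ (i + n%:Z) - aZ i.
set l := fun n : nat => ll (i + n%:Z) + gg (i + n%:Z).
have B2 : \sum_(n < M) (if aZ (i + n%:Z) - aZ i < t
                     then ll (i + n%:Z) + gg (i + n%:Z) else 0)
   <= \sum_(r <- iota 0 N) l r * (Num.ceil ((t - x r) / p))%:~R.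
  rewrite -(big_mkord xpredT (fun n => if x n < t then l n else 0)).
  rewrite /index_iota subn0.
  apply: comb => //.
  - by move=> n; rewrite /x subr_ge0; apply: a_mono; rewrite lerDl.
  - move=> n; rewrite /x.
    have -> : i + (N + n)%N%:Z = (i + n%:Z) + 1 * N%:Z by rewrite mul1r PoszD addrA addrAC.
    by rewrite a_per mul1r addrAC.
  - move=> n; rewrite /l.
    have -> : i + (N + n)%N%:Z = (i + n%:Z) + 1 * N%:Z by rewrite mul1r PoszD addrA addrAC.
    by rewrite ll_per gg_per.
  - by move=> n; rewrite /l; apply: addr_ge0; [exact: ll_ge0 | exact: gg_ge0].
  - move=> n Hn lp; rewrite /x.
    have h1 : aZ (i + n%:Z) < eZ (i + n%:Z) by rewrite -subr_gt0 len_eq.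
    have h2 : eZ (i + n%:Z) <= aZ (i + N%:Z) by apply: ea_mono; rewrite ltrD2l ltz_nat.
    have h3 : aZ (i + N%:Z) = aZ i + p.
      by have := a_per i 1; rewrite mul1r => ->; rewrite mul1r.
    by rewrite ltrBlDl -h3; exact: (lt_le_trans h1 h2).
have [q [j [Hj Ei]]] := decompZ N i HN.
have B3 : C * \sum_(r <- iota 0 N) l r * (Num.ceil ((t - x r) / p))%:~R
          = alpha_term N p o L ell C t j.
  rewrite /alpha_term -[in iota j N](addn0 j) iotaDl big_map mulr_sumr.
  apply: eq_bigr => r _.
  have Er : i + r%:Z = (j + r)%N%:Z + q * N%:Z by rewrite Ei PoszD [RHS]addrC addrA.
  have Ej : i = j%:Z + q * N%:Z by rewrite Ei addrC.
  rewrite /l /x Er ll_per gg_per a_per Ej a_per.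
  rewrite /ll /gg /aZ /oo /orel.
  set A := (_ + _)%N%:Z.
  have -> : (t - (oZ N p o A - LG N p o L ell C A + q%:~R * p -
          (oZ N p o j - LG N p o L ell C j + q%:~R * p))) / p =
          (t - (oZ N p o A - oZ N p o j) + LG N p o L ell C A - LG N p o L ell C j) / p.
    by rewrite alg1.
  by rewrite mulrA (mulrC C).
have B4 : alpha_term N p o L ell C t j <= alpha_GBST N p o L ell C t.
  exact: (bigmax_ge _ _ _ _ _ Hj).
apply: (le_trans (lee_wpmul2l _ B1)); first by rewrite lee_fin ltW.
rewrite -EFinM lee_fin -B3 in B4 *.
apply: le_trans B4.
by rewrite ler_pM2l // (le_trans B2).
Qed.
End Main.

Theorem lemma2 (R : realType) (C p ell : R) (N : nat) (o L : nat -> R)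
  (HC : 0 < C) (Hp : 0 < p) (Hell : 0 < ell) (HN : (1 <= N)%N)
  (Ho0 : 0 <= o 0%N) (HoN : o N.-1 < p)
  (Hinc : forall k : nat, (k.+1 < N)%N -> o k < o k.+1)
  (HL0 : forall k : nat, (k < N)%N -> 0 <= L k)
  (Hgap : forall k : nat, (k.+1 < N)%N -> o k + L k <= o k.+1)
  (Hlast : o N.-1 + L N.-1 <= o 0%N + p) :
  forall s t : R, 0 <= t ->
    (C%:E * lebesgue_measure
       ((GBset N p o L ell C `|` STset N p o L) `&` [set x : R | (s <= x <= s + t)%R])
     <= (alpha_GBST N p o L ell C t)%:E)%E.
Proof.
move=> s t Ht; exact: final.
Qed.
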